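(* Let $\mu_n>0$ satisfy $\mu_n\to 0$ and $n^{1/2}\mu_n\to\mathfrak m$ with $0\le\mathfrak m\le\infty$. Let $\theta_n\in\mathbb R$ be a sequence of true parameters. (i) Suppose $0\le\mathfrak m<\infty$ and $n^{1/2}\theta_n\to\nu\in\mathbb R\cup\{-\infty,\infty\}$. Then $$\lim_{n\to\infty}P_{n,\theta_n}(\hat\theta_A=0)=\Phi(-\nu+\mathfrak m)-\Phi(-\nu-\mathfrak m).$$ (ii) Suppose $\mathfrak m=\infty$ and $\theta_n/\mu_n\to\zeta\in\mathbb R\cup\{-\infty,\infty\}$. Then: 1. if $|\zeta|<1$, then $\lim_{n}P_{n,\theta_n}(\hat\theta_A=0)=1$; 2. if $|\zeta|=1$ and $n^{1/2}(\mu_n-\zeta\theta_n)\to r\in\mathbb R\cup\{-\infty,\infty\}$, then $\lim_nP_{n,\theta_n}(\hat\theta_A=0)=\Phi(r)$; 3. if $|\zeta|>1$, then $\lim_nP_{n,\theta_n}(\hat\theta_A=0)=0$.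
   Context: Gaussian location model: for each sample size $n$, $y_1,\dots,y_n$ are i.i.d. $N(\theta,1)$ with $\theta\in\mathbb R$ unknown; $\bar y$ is their mean. $P_{n,\theta}$ denotes the probability governing a sample of size $n$ when $\theta$ is the true parameter. Given a nonrandom tuning parameter $\mu_n>0$, the adaptive LASSO estimator is $$\hat\theta_A=\bar y(1-\mu_n^2/\bar y^2)_+=\begin{cases}0,&|\bar y|\le\mu_n,\\ \bar y-\mu_n^2/\bar y,&|\bar y|>\mu_n.\end{cases}$$ $\Phi$ denotes the standard normal cdf, with $\Phi(\infty)=1$, $\Phi(-\infty)=0$. *)

(* Defs.v *)
From Stdlib Require Import Reals Lra.
Open Scope R_scope.

Definition phi (x : R) : R := exp (- x ^ 2 / 2) / sqrt (2 * PI).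

Definition improper_int_left (f : R -> R) (x l : R) : Prop :=
  forall eps, 0 < eps -> exists A, forall a, a < A ->
    exists pr : Riemann_integrable f a x, Rabs (RiemannInt pr - l) < eps.

Definition improper_int_R (f : R -> R) (l : R) : Prop :=
  forall eps, 0 < eps -> exists A, forall a b, a < - A -> A < b ->
    exists pr : Riemann_integrable f a b, Rabs (RiemannInt pr - l) < eps.

Definition is_std_normal_cdf (Phi : R -> R) : Prop :=
  forall x, improper_int_left phi x (Phi x).

Definition alasso (mu ybar : R) : R :=
  ybar * Rmax 0 (1 - mu ^ 2 / ybar ^ 2).

(* Density of ybar ~ N(theta, 1/n) under P_{n,theta}. *)
Definition ybar_density (n : nat) (theta y : R) : R :=
  sqrt (INR n) * phi (sqrt (INR n) * (y - theta)).

Definition indic (P : Prop) (d : {P} + {~ P}) : R := if d then 1 else 0.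

Definition prob_alasso_zero (n : nat) (mu theta p : R) : Prop :=
  improper_int_R
    (fun y => ybar_density n theta y * indic _ (Req_EM_T (alasso mu y) 0)) p.

Inductive ER : Type := Fin (x : R) | PInf | MInf.

Definition cv_ER (u : nat -> R) (l : ER) : Prop :=
  match l with
  | Fin x => Un_cv u x
  | PInf => cv_infty u
  | MInf => cv_infty (fun n => - u n)
  end.

Definition ER_neg_plus (e : ER) (c : R) : ER :=
  match e with
  | Fin x => Fin (- x + c)
  | PInf => MInf
  | MInf => PInf
  end.

Definition PhiE (Phi : R -> R) (e : ER) : R :=
  match e with
  | Fin x => Phi x
  | PInf => 1
  | MInf => 0
  end.

Definition ER_abs_lt1 (e : ER) : Prop :=
  match e with Fin x => Rabs x < 1 | _ => False end.

Definition ER_abs_gt1 (e : ER) : Prop :=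
  match e with Fin x => 1 < Rabs x | _ => True end.

(* Main.v *)
Require Import Defs.
From Stdlib Require Import Reals Lra Lia.
From Coquelicot Require Import Coquelicot.
Open Scope R_scope.


Definition gf (t : R) : R := exp (- t ^ 2 / 2).
Definition hf (x t : R) : R := exp (- (x ^ 2 * (1 + t ^ 2)) / 2) / (1 + t ^ 2).
Definition dhf (x t : R) : R := - x * exp (- (x ^ 2 * (1 + t ^ 2)) / 2).

Lemma one_t2_pos t : 0 < 1 + t ^ 2.
Proof. nra. Qed.

Lemma gf_cont x : continuous gf x.
Proof.
apply (ex_derive_continuous (K:=R_AbsRing) (V:=R_NormedModule)). unfold gf. auto_derive. easy.
Qed.

Lemma hf_cont x t : continuous (hf x) t.
Proof.
apply (ex_derive_continuous (K:=R_AbsRing) (V:=R_NormedModule)). unfold hf. auto_derive. generalize (one_t2_pos t); lra.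
Qed.

Lemma hf_derive x t : is_derive (fun u => hf u t) x (dhf x t).
Proof.
unfold hf, dhf. auto_derive. easy.
generalize (one_t2_pos t); intro.
replace (x * (x * 1) * (1 + t * (t * 1))) with (x ^ 2 * (1 + t ^ 2)) by ring.
unfold Rdiv. field. lra.
Qed.

Lemma dhf_cont2 x t : continuity_2d_pt dhf x t.
Proof.
unfold dhf.
apply continuity_2d_pt_mult.
apply continuity_2d_pt_opp, continuity_2d_pt_id1.
apply continuity_1d_2d_pt_comp. apply derivable_continuous_pt, derivable_exp.
apply continuity_2d_pt_ext with (fun u v => - (u * u * (1 + v * v)) * / 2).
intros; simpl; field.
apply continuity_2d_pt_mult. apply continuity_2d_pt_opp.
apply continuity_2d_pt_mult. apply continuity_2d_pt_mult; apply continuity_2d_pt_id1.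
apply continuity_2d_pt_plus. apply continuity_2d_pt_const.
apply continuity_2d_pt_mult; apply continuity_2d_pt_id2.
apply continuity_2d_pt_const.
Qed.

Lemma exRc (f : R -> R) a b : (forall z, continuous f z) -> ex_RInt f a b.
Proof. intros Hf. apply (ex_RInt_continuous (V:=R_CompleteNormedModule)). intros; apply Hf. Qed.

Definition H (x : R) := RInt (hf x) 0 1.
Definition G (x : R) := RInt gf 0 x.

Lemma G_derive (x : R) : is_derive G x (gf x).
Proof.
apply is_derive_RInt with 0.
apply filter_forall. intros b. apply (RInt_correct (V:=R_CompleteNormedModule)), exRc.
intros; apply gf_cont.
apply gf_cont.
Qed.

Lemma H_derive (x : R) : is_derive H x (- gf x * G x).
Proof.
assert (D := is_derive_RInt_param hf 0 1 x).
unfold H.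
replace (- gf x * G x) with (RInt (fun t => Derive (fun u => hf u t) x) 0 1).
apply D.
apply filter_forall. intros y t _. eexists; apply hf_derive.
intros t _. apply continuity_2d_pt_ext with dhf.
intros; symmetry; apply is_derive_unique, hf_derive.
apply dhf_cont2.
apply filter_forall. intros y. apply exRc. intros; apply hf_cont.
rewrite (RInt_ext _ (fun t => scal (- gf x) (scal x (gf (x * t + 0))))).
rewrite (RInt_scal (V:=R_CompleteNormedModule)). rewrite (RInt_comp_lin (V:=R_CompleteNormedModule)).
unfold G, scal; simpl; unfold mult; simpl. rewrite Rmult_0_r, Rplus_0_r, Rmult_1_r, Rplus_0_r. easy.
apply exRc; intros; apply gf_cont.
apply (ex_RInt_ext (fun t => scal x (gf (x * t + 0)))).
intros; easy.
apply exRc. intros. apply (ex_derive_continuous (K:=R_AbsRing) (V:=R_NormedModule)). unfold gf, scal; simpl; unfold mult; simpl. auto_derive. easy.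
intros t _. transitivity (dhf x t). apply is_derive_unique, hf_derive.
unfold dhf, gf, scal; simpl; unfold mult; simpl.
replace (- (x * (x * 1) * (1 + t * (t * 1))) / 2) with (- (x * (x * 1)) / 2 + - ((x * t + 0) * ((x * t + 0) * 1)) / 2) by field.
rewrite exp_plus. ring.
Qed.

Lemma F_derive (y : R) : is_derive (fun y => G y * G y + 2 * H y) y 0.
Proof.
assert (A := is_derive_plus (K:=R_AbsRing) (V:=R_NormedModule) (fun y => G y * G y) (fun y => 2 * H y) y _ _
  (is_derive_mult (K:=R_AbsRing) G G y _ _ (G_derive y) (G_derive y) Rmult_comm)
  (is_derive_scal H y 2 _ (H_derive y))).
replace 0 with (gf y * G y + G y * gf y + 2 * (- gf y * G y)) by ring.
exact A.
Qed.

Lemma H0 : H 0 = PI / 4.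
Proof.
unfold H.
rewrite (RInt_ext _ (fun t => / (1 + t ^ 2))).
replace (PI/4) with (atan 1 - atan 0) by (rewrite atan_1, atan_0; ring).
apply is_RInt_unique.
apply (is_RInt_derive (V:=R_CompleteNormedModule) atan).
intros x _. pose proof (is_derive_atan x) as D. unfold Rsqr in D. assert (E : x ^ 2 = x * x) by (simpl; ring). rewrite E. exact D.
intros. apply (ex_derive_continuous (K:=R_AbsRing) (V:=R_NormedModule)). auto_derive. generalize (one_t2_pos x); lra.
intros. unfold hf. replace (- (0 ^ 2 * (1 + x ^ 2)) / 2) with 0 by field. rewrite exp_0. unfold Rdiv. rewrite Rmult_1_l. reflexivity.
Qed.

Lemma G0 : G 0 = 0.
Proof. unfold G. apply (RInt_point (V:=R_CompleteNormedModule)). Qed.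

Lemma F_const x : G x * G x + 2 * H x = PI / 2.
Proof.
assert (E : is_RInt (fun _ => 0) 0 x (minus ((fun y => G y * G y + 2 * H y) x) ((fun y => G y * G y + 2 * H y) 0))).
apply (is_RInt_derive (V:=R_CompleteNormedModule) (fun y => G y * G y + 2 * H y)).
intros; apply F_derive.
intros; apply continuous_const.
apply (is_RInt_unique (V:=R_CompleteNormedModule)) in E. rewrite (RInt_const (V:=R_CompleteNormedModule)) in E.
rewrite G0, H0 in E. unfold minus, plus, opp, scal in E; simpl in E; unfold mult in E; simpl in E.
lra.
Qed.

Lemma gf_pos x : 0 < gf x.
Proof. apply exp_pos. Qed.

Lemma H_bounds x : 0 <= H x <= gf x.
Proof.
unfold H. split.
apply RInt_ge_0. lra. apply exRc; intros; apply hf_cont.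
intros t _. unfold hf. generalize (one_t2_pos t) (exp_pos (- (x ^ 2 * (1 + t ^ 2)) / 2)); intros.
apply Rlt_le, Rdiv_lt_0_compat; lra.
replace (gf x) with (RInt (fun _ => gf x) 0 1).
apply RInt_le. lra. apply exRc; intros; apply hf_cont.
apply exRc; intros; apply continuous_const.
intros t _. unfold hf, gf. generalize (one_t2_pos t) (exp_pos (- (x ^ 2 * (1 + t ^ 2)) / 2)); intros.
apply Rle_trans with (exp (- (x ^ 2 * (1 + t ^ 2)) / 2)).
set (e := exp (- (x ^ 2 * (1 + t ^ 2)) / 2)) in *.
assert (e / (1 + t ^ 2) * (1 + t ^ 2) = e) by (field; lra).
assert (0 <= e / (1 + t ^ 2)) by (apply Rlt_le, Rdiv_lt_0_compat; lra).
assert (1 <= 1 + t ^ 2) by nra. nra.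
destruct (Req_dec (- (x ^ 2 * (1 + t ^ 2)) / 2) (- x ^ 2 / 2)) as [E|E].
rewrite E; lra. apply Rlt_le, exp_increasing. nra.
rewrite (RInt_const (V:=R_CompleteNormedModule)). unfold scal; simpl; unfold mult; simpl. ring.
Qed.

Lemma gf_lim : is_lim gf p_infty 0.
Proof.
unfold gf.
apply (is_lim_comp exp (fun y => - y ^ 2 / 2) p_infty 0 m_infty).
apply is_lim_exp_m.
apply (is_lim_le_m_loc (fun y => - (1/2) * y)).
exists 1. intros y Hy. nra.
replace m_infty with (Rbar_mult (-(1/2)) p_infty).
apply is_lim_scal_l, is_lim_id.
simpl. case (Rle_dec 0 (-(1/2))); intros h. exfalso; lra. easy.
exists 0; intros; discriminate.
Qed.

Lemma H_lim : is_lim H p_infty 0.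
Proof.
apply (is_lim_le_le_loc (fun _ => 0) gf).
exists 0. intros; apply H_bounds.
apply is_lim_const. apply gf_lim.
Qed.

Lemma G_nonneg x : 0 <= x -> 0 <= G x.
Proof.
intros Hx. unfold G. apply RInt_ge_0. easy. apply exRc; intros; apply gf_cont.
intros; apply Rlt_le, gf_pos.
Qed.

Lemma G_lim : is_lim G p_infty (sqrt (PI / 2)).
Proof.
assert (L1 : is_lim (fun x => PI / 2 - 2 * H x) p_infty (PI / 2 - 2 * 0)).
apply is_lim_minus'. apply is_lim_const.
assert (A := is_lim_scal_l H 2 p_infty 0 H_lim). simpl in A.
exact A.
replace (PI / 2 - 2 * 0) with (PI / 2) in L1 by ring.
apply (is_lim_ext_loc (fun x => sqrt (PI / 2 - 2 * H x))).
exists 0. intros x Hx. rewrite <- (F_const x).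
replace (G x * G x + 2 * H x - 2 * H x) with (G x * G x) by ring.
apply sqrt_square, G_nonneg; lra.
apply (is_lim_comp_continuous (fun x => PI / 2 - 2 * H x) sqrt p_infty (PI/2)).
exact L1.
apply continuity_pt_filterlim, continuity_pt_sqrt. generalize PI_RGT_0; lra.
Qed.

Definition s2pi := sqrt (2 * PI).

Lemma s2pi_pos : 0 < s2pi.
Proof. unfold s2pi. apply sqrt_lt_R0. generalize PI_RGT_0; lra. Qed.

Lemma phi_gf x : phi x = gf x / s2pi.
Proof. reflexivity. Qed.

Lemma phi_cont x : continuous phi x.
Proof.
apply (ex_derive_continuous (K:=R_AbsRing) (V:=R_NormedModule)). unfold phi. auto_derive.
generalize s2pi_pos; unfold s2pi; lra.
Qed.

Lemma phi_even x : phi (- x) = phi x.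
Proof. unfold phi. f_equal. f_equal. f_equal. ring. Qed.

Lemma exphi a b : ex_RInt phi a b.
Proof. apply exRc, phi_cont. Qed.

Section PhiSec.
Variable Phi : R -> R.
Hypothesis HPhi : is_std_normal_cdf Phi.

Lemma L0 x : is_lim (fun c => RInt phi c x) m_infty (Phi x).
Proof.
unfold is_lim. simpl. apply filterlim_locally. intros eps.
destruct (HPhi x eps (cond_pos eps)) as [A HA].
exists A. intros c Hc. destruct (HA c Hc) as [pr Hpr].
rewrite <- RInt_Reals in Hpr. exact Hpr.
Qed.

Lemma lim_const_eq (f : R -> R) x (c d : R) : is_lim f x c -> (forall y, f y = d) -> c = d.
Proof.
intros Hf Hd.
assert (is_lim f x d). apply (is_lim_ext (fun _ => d)). intros; auto. apply is_lim_const.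
apply is_lim_unique in Hf. apply is_lim_unique in H1. rewrite Hf in H1. injection H1. auto.
Qed.

Lemma P1 a b : Phi b - Phi a = RInt phi a b.
Proof.
apply (lim_const_eq (fun c => RInt phi c b - RInt phi c a) m_infty).
apply is_lim_minus'; apply L0.
intros c. rewrite <- (RInt_Chasles (V:=R_CompleteNormedModule) phi c a b) by apply exphi.
unfold plus; simpl. ring.
Qed.

Lemma Phi_cont x : continuous Phi x.
Proof.
assert (D : is_derive (fun y => Phi y - Phi 0) x (phi x)).
apply (is_derive_RInt (V:=R_NormedModule) phi (fun y => Phi y - Phi 0) 0 x).
apply filter_forall. intros y. rewrite P1. apply (RInt_correct (V:=R_CompleteNormedModule)), exphi.
apply phi_cont.
assert (C : continuous (fun y => Phi y - Phi 0) x).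
apply (ex_derive_continuous (K:=R_AbsRing) (V:=R_NormedModule)). eexists; exact D.
apply (continuous_ext (fun y => plus (Phi y - Phi 0) (Phi 0))).
intros; unfold plus; simpl; ring.
apply (continuous_plus (K:=R_AbsRing) (V:=R_NormedModule)). exact C. apply continuous_const.
Qed.

Lemma tail x : x <= -1 -> 0 <= Phi x <= gf x / s2pi.
Proof.
intros Hx. assert (L := L0 x).
assert (Hs := s2pi_pos).
split.
- assert (Le := filterlim_le (F:=Rbar_locally' m_infty) (fun _ => 0) (fun c => RInt phi c x) 0 (Phi x)).
  simpl in Le. apply Le.
  exists x. intros c Hc. apply RInt_ge_0. lra. apply exphi.
  intros t _. rewrite phi_gf. apply Rlt_le, Rdiv_lt_0_compat. apply gf_pos. lra.
  apply is_lim_const. exact L.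
- assert (Le := filterlim_le (F:=Rbar_locally' m_infty) (fun c => RInt phi c x) (fun _ => gf x / s2pi) (Phi x) (gf x / s2pi)).
  simpl in Le. apply Le; [| exact L | apply is_lim_const].
  exists x. intros c Hc.
  assert (D : is_RInt (fun t => - t * phi t) c x (minus ((fun t => gf t / s2pi) x) ((fun t => gf t / s2pi) c))).
  apply (is_RInt_derive (V:=R_CompleteNormedModule) (fun t => gf t / s2pi)).
  intros t _. unfold gf, phi. fold s2pi. auto_derive. easy. match goal with |- ?a = ?b => change (@eq R a b) end. replace (- (t * (t * 1)) * / 2) with (- t ^ 2 / 2) by (unfold Rdiv; ring). field. lra.
  intros t0 _. apply (ex_derive_continuous (K:=R_AbsRing) (V:=R_NormedModule)). unfold phi. fold s2pi. auto_derive. lra.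
  apply (is_RInt_unique (V:=R_CompleteNormedModule)) in D.
  unfold minus, plus, opp in D; simpl in D.
  apply Rle_trans with (RInt (fun t => - t * phi t) c x).
  apply RInt_le. lra. apply exphi. apply ex_RInt_Reals_1, ex_RInt_Reals_0. eexists.
  apply (RInt_correct (V:=R_CompleteNormedModule)). apply exRc. intros.
  apply (ex_derive_continuous (K:=R_AbsRing) (V:=R_NormedModule)). unfold phi. fold s2pi. auto_derive. lra.
  intros t Ht. assert (0 < phi t) by (rewrite phi_gf; apply Rdiv_lt_0_compat; [apply gf_pos|lra]). nra.
  rewrite D. assert (0 < gf c / s2pi) by (apply Rdiv_lt_0_compat; [apply gf_pos|lra]). lra.
Qed.

Lemma gf_lim_m : is_lim gf m_infty 0.
Proof.
unfold gf.
apply (is_lim_comp exp (fun y => - y ^ 2 / 2) m_infty 0 m_infty).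
apply is_lim_exp_m.
apply (is_lim_le_m_loc (fun y => (1/2) * y)).
exists (-1). intros y Hy. nra.
assert (A := is_lim_scal_l _ (1/2) m_infty m_infty (is_lim_id m_infty)).
replace (Rbar_mult (1/2) m_infty) with m_infty in A. exact A.
simpl. case (Rle_dec 0 (1/2)); intros h. 2: exfalso; lra.
case (Rle_lt_or_eq_dec 0 (1 / 2) h); intros h'. easy. exfalso; lra.
exists 0; intros; discriminate.
Qed.

Lemma Phi_lim_m : is_lim Phi m_infty 0.
Proof.
apply (is_lim_le_le_loc (fun _ => 0) (fun x => / s2pi * gf x)).
exists (-1). intros y Hy. rewrite Rmult_comm. apply tail. lra.
apply is_lim_const.
replace (Finite 0) with (Rbar_mult (/ s2pi) 0) by (simpl; f_equal; ring).
apply is_lim_scal_l, gf_lim_m.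
Qed.

Lemma RInt_sym a b : RInt phi a b = RInt phi (- b) (- a).
Proof.
assert (D := is_RInt_comp_opp phi a b _ (RInt_correct (V:=R_CompleteNormedModule) _ _ _ (exphi (-a) (-b)))).
apply (is_RInt_unique (V:=R_CompleteNormedModule)) in D.
rewrite (RInt_ext _ (fun y => - phi y)) in D by (intros; unfold opp; simpl; rewrite phi_even; ring).
rewrite (RInt_opp (V:=R_CompleteNormedModule)) in D by apply exphi.
rewrite <- (opp_RInt_swap (V:=R_CompleteNormedModule) phi (-a) (-b)) by apply exphi.
unfold opp in D; simpl in D. unfold opp; simpl. lra.
Qed.

Lemma Phi_sym_const x y : Phi x + Phi (- x) = Phi y + Phi (- y).
Proof.
assert (A := P1 x y). assert (B := P1 (-y) (-x)). rewrite <- RInt_sym in B. lra.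
Qed.

Lemma Phi_decomp y : Phi y = Phi (- y) + (2 / s2pi) * G y.
Proof.
assert (A := P1 (-y) y).
rewrite <- (RInt_Chasles (V:=R_CompleteNormedModule) phi (-y) 0 y) in A by apply exphi.
rewrite (RInt_sym (-y) 0) in A. rewrite Ropp_0, Ropp_involutive in A.
unfold plus in A; simpl in A.
assert (B : RInt phi 0 y = / s2pi * G y).
unfold G. rewrite <- (RInt_scal (V:=R_CompleteNormedModule)).
apply RInt_ext. intros; rewrite phi_gf; unfold scal; simpl; unfold mult; simpl. unfold Rdiv. ring.
apply exRc, gf_cont.
rewrite B in A. unfold Rdiv. lra.
Qed.

Lemma s2pi_eq : s2pi = 2 * sqrt (PI / 2).
Proof.
unfold s2pi. replace (2 * PI) with ((2 * 2) * (PI / 2)) by field.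
rewrite sqrt_mult. rewrite sqrt_square. easy. lra. lra. generalize PI_RGT_0; lra.
Qed.

Lemma Phi_lim_p : is_lim Phi p_infty 1.
Proof.
apply (is_lim_ext (fun y => Phi (- y) + (2 / s2pi) * G y)).
intros; symmetry; apply Phi_decomp.
replace (Finite 1) with (Finite (0 + (2 / s2pi) * sqrt (PI / 2))).
apply is_lim_plus'.
apply (is_lim_comp Phi (fun y => - y) p_infty 0 m_infty). apply Phi_lim_m.
apply (is_lim_opp (fun y => y) p_infty p_infty), is_lim_id.
exists 0; intros; discriminate.
apply (is_lim_scal_l G (2 / s2pi) p_infty (sqrt (PI / 2))), G_lim.
f_equal. rewrite s2pi_eq. field. apply Rgt_not_eq, sqrt_lt_R0. generalize PI_RGT_0; lra.
Qed.

Lemma Phi_sym x : Phi x + Phi (- x) = 1.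
Proof.
symmetry. apply (lim_const_eq (fun y => Phi y + Phi (- y)) p_infty).
replace 1 with (1 + 0) by ring. apply is_lim_plus'. apply Phi_lim_p.
apply (is_lim_comp Phi (fun y => - y) p_infty 0 m_infty). apply Phi_lim_m.
apply (is_lim_opp (fun y => y) p_infty p_infty), is_lim_id.
exists 0; intros; discriminate.
intros; symmetry; apply Phi_sym_const.
Qed.

End PhiSec.

Definition PhiRb (Phi : R -> R) (l : Rbar) : R :=
  match l with Finite x => Phi x | p_infty => 1 | m_infty => 0 end.

Lemma PhiRb_lim Phi (HPhi : is_std_normal_cdf Phi) u l :
  is_lim_seq u l -> is_lim_seq (fun n => Phi (u n)) (PhiRb Phi l).
Proof.
intros Hu. destruct l as [r| |]; simpl.
- apply (filterlim_comp _ _ _ u Phi eventually (locally r) (locally (Phi r))).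
  exact Hu. apply Phi_cont; exact HPhi.
- apply (is_lim_comp_seq Phi u p_infty 1). apply Phi_lim_p; exact HPhi.
  exists 0%nat; intros; discriminate. exact Hu.
- apply (is_lim_comp_seq Phi u m_infty 0). apply Phi_lim_m; exact HPhi.
  exists 0%nat; intros; discriminate. exact Hu.
Qed.

Definition toRb (e : ER) : Rbar :=
  match e with Fin x => Finite x | PInf => p_infty | MInf => m_infty end.

Lemma cv_ER_lim u e : cv_ER u e -> is_lim_seq u (toRb e).
Proof.
destruct e as [x| |]; simpl; intros H.
- apply is_lim_seq_Reals; exact H.
- apply is_lim_seq_p_infty_Reals; exact H.
- apply is_lim_seq_p_infty_Reals in H. apply (proj1 (is_lim_seq_opp _ _)) in H.
  simpl in H. apply (is_lim_seq_ext _ _ _ (fun n => Ropp_involutive (u n))) in H. exact H.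
Qed.

Lemma PhiE_Rb Phi e : PhiE Phi e = PhiRb Phi (toRb e).
Proof. destruct e; reflexivity. Qed.

Lemma alasso_in mu y : 0 < mu -> Rabs y < mu -> alasso mu y = 0.
Proof.
intros Hmu Hy. unfold alasso. destruct (Req_dec y 0) as [E|E].
subst; ring.
assert (Y : 0 < y ^ 2) by (rewrite <- pow2_abs; apply pow_lt, Rabs_pos_lt, E).
assert (Y2 : y ^ 2 < mu ^ 2) by (rewrite <- (pow2_abs y); assert (0 <= Rabs y) by apply Rabs_pos; nra).
assert (T : mu ^ 2 / y ^ 2 * y ^ 2 = mu ^ 2) by (field; lra).
rewrite Rmax_left. ring. nra.
Qed.

Lemma alasso_out mu y : 0 < mu -> mu < Rabs y -> alasso mu y <> 0.
Proof.
intros Hmu Hy. unfold alasso.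
assert (E : y <> 0) by (intro; subst; rewrite Rabs_R0 in Hy; lra).
assert (Y : 0 < y ^ 2) by (rewrite <- pow2_abs; apply pow_lt, Rabs_pos_lt, E).
assert (Y2 : mu ^ 2 < y ^ 2) by (rewrite <- (pow2_abs y); nra).
assert (T : mu ^ 2 / y ^ 2 * y ^ 2 = mu ^ 2) by (field; lra).
rewrite Rmax_right by nra.
apply Rmult_integral_contrapositive. split. exact E. nra.
Qed.

Lemma p_formula Phi (HPhi : is_std_normal_cdf Phi) n mu th pp :
  (1 <= n)%nat -> 0 < mu -> prob_alasso_zero n mu th pp ->
  pp = Phi (sqrt (INR n) * (mu - th)) - Phi (sqrt (INR n) * (- mu - th)).
Proof.
intros Hn Hmu Hp. unfold prob_alasso_zero, improper_int_R in Hp.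
set (f := fun y => ybar_density n th y * indic _ (Req_EM_T (alasso mu y) 0)) in Hp.
assert (Hs : 0 < sqrt (INR n)). apply sqrt_lt_R0, lt_0_INR. lia.
set (s := sqrt (INR n)) in *.
set (V := Phi (s * (mu - th)) - Phi (s * (- mu - th))).
assert (Z : forall a b, (forall y, Rmin a b < y < Rmax a b -> f y = 0) -> is_RInt f a b 0).
{ intros a b Hy. apply (is_RInt_ext (fun _ => 0)). intros y Hy'. symmetry; apply Hy; auto.
  assert (C := is_RInt_const (V:=R_NormedModule) a b 0). rewrite <- (Rmult_0_r (b - a)) at 1. exact C. }
assert (Hint : forall a b, a < - mu -> mu < b -> is_RInt f a b V).
{ intros a b Ha Hb.
  replace V with (plus (plus 0 V) 0) by (unfold plus; simpl; ring).
  apply (is_RInt_Chasles (V:=R_NormedModule)) with mu. apply (is_RInt_Chasles (V:=R_NormedModule)) with (- mu).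
  - apply Z. intros y Hy. rewrite Rmin_left, Rmax_right in Hy by lra.
    unfold f. destruct (Req_EM_T (alasso mu y) 0) as [e|e]; simpl.
    exfalso. apply (alasso_out mu y Hmu). rewrite Rabs_left; lra. exact e. ring.
  - apply (is_RInt_ext (fun y => scal s (phi (s * y + (- s * th))))).
    intros y Hy. rewrite Rmin_left, Rmax_right in Hy by lra.
    unfold f. destruct (Req_EM_T (alasso mu y) 0) as [e|e]; simpl.
    unfold ybar_density, scal; simpl; unfold mult; simpl. fold s.
    replace (s * (y - th)) with (s * y + - s * th) by ring. ring.
    exfalso. apply e. apply alasso_in. easy. apply Rabs_def1; lra.
    apply (is_RInt_comp_lin (V:=R_NormedModule) phi s (- s * th) (- mu) mu V).
    unfold V. replace (s * (mu - th)) with (s * mu + - s * th) by ring.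
    replace (s * (- mu - th)) with (s * - mu + - s * th) by ring.
    rewrite (P1 Phi HPhi). apply (RInt_correct (V:=R_CompleteNormedModule)), exphi.
  - apply Z. intros y Hy. rewrite Rmin_left, Rmax_right in Hy by lra.
    unfold f. destruct (Req_EM_T (alasso mu y) 0) as [e|e]; simpl.
    exfalso. apply (alasso_out mu y Hmu). rewrite Rabs_right; lra. exact e. ring. }
destruct (Req_dec pp V) as [E|E]. exact E. exfalso.
assert (Heps : 0 < Rabs (V - pp)) by (apply Rabs_pos_lt; intro; apply E; lra).
destruct (Hp _ Heps) as [A HA].
destruct (HA (- (Rabs A + mu + 1)) (Rabs A + mu + 1)) as [pr Hpr].
generalize (Rle_abs A) (Rabs_pos A); lra. generalize (Rle_abs A); lra.
rewrite <- RInt_Reals in Hpr.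
rewrite (is_RInt_unique (V:=R_CompleteNormedModule) _ _ _ _ (Hint (- (Rabs A + mu + 1)) (Rabs A + mu + 1) ltac:(generalize (Rabs_pos A); lra) ltac:(generalize (Rabs_pos A); lra))) in Hpr.
lra.
Qed.

Lemma lim_cmQ (c : R) Q z : is_lim_seq Q z -> is_lim_seq (fun n => c - Q n) (Rbar_minus c z).
Proof.
intros HQ. apply is_lim_seq_minus with c z. apply is_lim_seq_const. exact HQ.
destruct z; reflexivity.
Qed.

Theorem proposition1
  (Phi : R -> R) (HPhi : is_std_normal_cdf Phi)
  (mu theta p : nat -> R)
  (Hmu_pos : forall n, 0 < mu n)
  (Hmu0 : Un_cv mu 0)
  (Hp : forall n, (1 <= n)%nat -> prob_alasso_zero n (mu n) (theta n) (p n)) :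
  (* (i) *)
  (forall (m : R) (nu : ER),
     Un_cv (fun n => sqrt (INR n) * mu n) m ->
     cv_ER (fun n => sqrt (INR n) * theta n) nu ->
     Un_cv p (PhiE Phi (ER_neg_plus nu m) - PhiE Phi (ER_neg_plus nu (- m))))
  /\
  (* (ii) *)
  (cv_infty (fun n => sqrt (INR n) * mu n) ->
   forall zeta : ER,
     cv_ER (fun n => theta n / mu n) zeta ->
     (ER_abs_lt1 zeta -> Un_cv p 1)
     /\ (forall (z : R) (r : ER), zeta = Fin z -> Rabs z = 1 ->
           cv_ER (fun n => sqrt (INR n) * (mu n - z * theta n)) r ->
           Un_cv p (PhiE Phi r))
     /\ (ER_abs_gt1 zeta -> Un_cv p 0)).
Proof.
set (a := fun n => sqrt (INR n) * (mu n - theta n)).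
set (b := fun n => sqrt (INR n) * (- mu n - theta n)).
assert (Pe : forall la lb L, is_lim_seq a la -> is_lim_seq b lb ->
   PhiRb Phi la - PhiRb Phi lb = L -> Un_cv p L).
{ intros la lb L Ha Hb HL. apply is_lim_seq_Reals. rewrite <- HL.
  apply is_lim_seq_ext_loc with (fun n => Phi (a n) - Phi (b n)).
  exists 1%nat. intros n Hn. symmetry.
  apply (p_formula Phi HPhi n (mu n) (theta n) (p n) Hn (Hmu_pos n) (Hp n Hn)).
  apply is_lim_seq_minus'; apply PhiRb_lim; auto. }
split.
- intros m nu HM HT.
  apply cv_ER_lim in HT. apply is_lim_seq_Reals in HM.
  apply (Pe (toRb (ER_neg_plus nu m)) (toRb (ER_neg_plus nu (- m)))).
  + apply (is_lim_seq_ext (fun n => - (sqrt (INR n) * theta n) + sqrt (INR n) * mu n)).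
    intros; unfold a; ring.
    apply is_lim_seq_plus with (Rbar_opp (toRb nu)) m.
    apply (proj1 (is_lim_seq_opp _ _)), HT. exact HM. destruct nu; reflexivity.
  + apply (is_lim_seq_ext (fun n => - (sqrt (INR n) * theta n) + - (sqrt (INR n) * mu n))).
    intros; unfold b; ring.
    apply is_lim_seq_plus with (Rbar_opp (toRb nu)) (- m).
    apply (proj1 (is_lim_seq_opp _ _)), HT. apply (proj1 (is_lim_seq_opp _ (Finite m))), HM. destruct nu; reflexivity.
  + rewrite !PhiE_Rb. reflexivity.
- intros HM zeta HQ.
  apply is_lim_seq_p_infty_Reals in HM. apply cv_ER_lim in HQ.
  assert (Ea : forall n, sqrt (INR n) * mu n * (1 - theta n / mu n) = a n).
  { intros n; unfold a. generalize (Hmu_pos n); intros. field. lra. }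
  assert (Eb : forall n, sqrt (INR n) * mu n * (-1 - theta n / mu n) = b n).
  { intros n; unfold b. generalize (Hmu_pos n); intros. field. lra. }
  assert (LA : forall l, is_Rbar_mult p_infty (Rbar_minus 1 (toRb zeta)) l -> is_lim_seq a l).
  { intros l Hl. apply (is_lim_seq_ext _ _ _ Ea). apply is_lim_seq_mult with p_infty (Rbar_minus 1 (toRb zeta)).
    exact HM. apply lim_cmQ, HQ. exact Hl. }
  assert (LB : forall l, is_Rbar_mult p_infty (Rbar_minus (-1) (toRb zeta)) l -> is_lim_seq b l).
  { intros l Hl. apply (is_lim_seq_ext _ _ _ Eb). apply is_lim_seq_mult with p_infty (Rbar_minus (-1) (toRb zeta)).
    exact HM. apply lim_cmQ, HQ. exact Hl. }
  split; [|split].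
  + intros Hz. destruct zeta as [z| |]; simpl in Hz; try contradiction.
    destruct (Rabs_def2 _ _ Hz) as [Hz1 Hz2].
    apply (Pe p_infty m_infty).
    apply LA, is_Rbar_mult_p_infty_pos. simpl. lra.
    apply LB, is_Rbar_mult_p_infty_neg. simpl. lra.
    simpl. ring.
  + intros z r Ez Hz HR. subst zeta. apply cv_ER_lim in HR.
    destruct (Rcase_abs z) as [Hneg|Hpos].
    * rewrite Rabs_left in Hz by lra. assert (z = -1) by lra. subst z.
      apply (Pe p_infty (Rbar_opp (toRb r))).
      apply LA, is_Rbar_mult_p_infty_pos. simpl. lra.
      apply (is_lim_seq_ext (fun n => - (sqrt (INR n) * (mu n - -1 * theta n)))).
      intros; unfold b; ring. apply (proj1 (is_lim_seq_opp _ _)), HR.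
      destruct r as [x| |]; simpl; try ring.
      generalize (Phi_sym Phi HPhi x); intros; lra.
    * rewrite Rabs_right in Hz by lra. subst z.
      apply (Pe (toRb r) m_infty).
      apply (is_lim_seq_ext (fun n => sqrt (INR n) * (mu n - 1 * theta n))).
      intros; unfold a; ring. exact HR.
      apply LB, is_Rbar_mult_p_infty_neg. simpl. lra.
      destruct r; simpl; ring.
  + intros Hz. destruct zeta as [z| |]; simpl in Hz.
    * destruct (Rcase_abs z) as [Hneg|Hpos].
      -- rewrite Rabs_left in Hz by lra.
         apply (Pe p_infty p_infty).
         apply LA, is_Rbar_mult_p_infty_pos. simpl. lra.
         apply LB, is_Rbar_mult_p_infty_pos. simpl. lra.
         simpl; ring.
      -- rewrite Rabs_right in Hz by lra.
         apply (Pe m_infty m_infty).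
         apply LA, is_Rbar_mult_p_infty_neg. simpl. lra.
         apply LB, is_Rbar_mult_p_infty_neg. simpl. lra.
         simpl; ring.
    * apply (Pe m_infty m_infty).
      apply LA, is_Rbar_mult_p_infty_neg. simpl. easy.
      apply LB, is_Rbar_mult_p_infty_neg. simpl. easy.
      simpl; ring.
    * apply (Pe p_infty p_infty).
      apply LA, is_Rbar_mult_p_infty_pos. simpl. easy.
      apply LB, is_Rbar_mult_p_infty_pos. simpl. easy.
      simpl; ring.
Qed.
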